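(* Let $\mathcal A=(Q,\Sigma,\delta,\rho)$ be a connected bireversible Mealy automaton whose labeled orbit tree $\mathfrak t(\mathcal A)$ has no active self-liftable branch, and let $\mathfrak j=\mathfrak j(\mathbf e)$ be a jungle tree whose trunk $\mathbf e$ has length $n$ and edge labels $k_1,\dots,k_n$ (from the root down). Then for every $i\in\{0,\dots,n\}$ and every $\mathbf u\in Q^i$ which is a prefix of some stem, the number of stems of $\mathfrak j$ with prefix $\mathbf u$ equals $k_{i+1}k_{i+2}\cdots k_n$ (in particular it depends only on $i$).
   Context: Mealy automata. A Mealy automaton is $\mathcal A=(Q,\Sigma,\delta,\rho)$ with $Q,\Sigma$ finite non-empty sets, $\delta=(\delta_i\colon Q\to Q)_{i\in\Sigma}$, $\rho=(\rho_x\colon\Sigma\to\Sigma)_{x\in Q}$; transitions $x\xrightarrow{i\mid\rho_x(i)}\delta_i(x)$. Invertible: each $\rho_x$ a permutation of $\Sigma$; reversible: each $\delta_i$ a permutation of $Q$; bireversible: invertible, reversible, and for each $j\in\Sigma$ the map $x\mapsto\delta_{\rho_x^{-1}(j)}(x)$ is a permutation of $Q$. Connected: the directed graph on $Q$ with edges $x\to\delta_i(x)$ is connected. Extensions: $\rho_x(i\mathbf s)=\rho_x(i)\rho_{\delta_i(x)}(\mathbf s)$; $\rho_{x_1\cdots x_m}=\rho_{x_m}\circ\cdots\circ\rho_{x_1}$; $\delta_i(x\mathbf u)=\delta_i(x)\delta_{\rho_x(i)}(\mathbf u)$ on $Q^*$, $\delta_{i_1\cdots i_m}=\delta_{i_m}\circ\cdots\circ\delta_{i_1}$.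 The connected components of $\mathcal A^n$ (stateset $Q^n$, transitions $\mathbf u\xrightarrow{i\mid\rho_{\mathbf u}(i)}\delta_i(\mathbf u)$) are, for reversible $\mathcal A$, the orbits of $Q^n$ under the maps $\delta_{\mathbf s}$. Orbit tree $\mathfrak t(\mathcal A)$: vertices at level $n\ge0$ are the connected components of $\mathcal A^n$; an edge from the component of $\mathbf u\in Q^n$ to that of $\mathbf ux$ for all $\mathbf u,x$; edge $C\to D$ labeled $\#D/\#C$. $\top,\bot$ = first/last vertex of a downward path; level of an edge/path = level of its top vertex. A word of $Q^*\cup Q^\omega$ represents the initial path through the components of its prefixes. Edge $e$ is liftable to $f$ if every word of $\bot(e)$ has a suffix in $\bot(f)$; paths are liftable if corresponding edges are. $f$ is a legitimate child of $e$ if $\top(f)=\bot(e)$ and $f$ is liftable to $e$. A path/subtree $\mathfrak s$ is $k$-self-liftable if for all $i\ge0$ every path in $\mathfrak s$ starting at level $i+k$ is liftable to a path in $\mathfrak s$ starting at level $i$; self-liftable if $k$-self-liftable for some $k>0$. A branch (infinite initial path) is active if its labels are not eventually all $1$. Jungle trees: for a finite 1-self-liftable initial path $\mathbf e$ of length $n$ whose last edge has at least two legitimate children, all labeled $1$, $\mathfrak j(\mathbf e)$ consists of $\mathbf e$ (the trunk) plus all edges descending from $\bot(\mathbf e)$ that are liftable to the last edge of $\mathbf e$. Stems: the words of $\bot(\mathbf e)\subseteq Q^n$. *)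

(* Defs.v *)
From HB Require Import structures.
From mathcomp Require Import all_boot all_algebra.
From mathcomp Require Import boolp.
From Stdlib Require Import Relations.
Set Implicit Arguments. Unset Strict Implicit. Unset Printing Implicit Defensive.
Import GRing.Theory Num.Theory.

(* A Mealy automaton (Q, S, delta, rho): delta i : Q -> Q for i : S,
   rho x : S -> S for x : Q; transition x --i|rho x i--> delta i x. *)
Section Mealy.
Variables (Q S : finType) (delta : S -> Q -> Q) (rho : Q -> S -> S).

Definition invertible := forall x : Q, bijective (rho x).
Definition reversible := forall i : S, bijective (delta i).
(* inverse of rho x (meaningful when rho x is a permutation) *)
Definition rhoinv (x : Q) (j : S) : S := odflt j [pick i | rho x i == j].
Definition bireversible :=
  [/\ invertible, reversible &
      forall j : S, bijective (fun x : Q => delta (rhoinv x j) x)].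

Definition qstep (x y : Q) : Prop := exists i : S, delta i x = y.
Definition connected := forall x y : Q, clos_refl_sym_trans Q qstep x y.

Fixpoint deltaw (i : S) (u : seq Q) : seq Q :=
  if u is x :: u' then delta i x :: deltaw (rho x i) u' else [::].

Definition wstep (u v : seq Q) : Prop := exists i : S, deltaw i u = v.
(* v lies in the connected component of u (in A^(size u)) *)
Definition wcomp (u v : seq Q) : Prop := clos_refl_sym_trans (seq Q) wstep u v.

Definition ccard (u : seq Q) : nat :=
  #|[set t : (size u).-tuple Q | `[< wcomp u (val t) >]]|.

(* A vertex at level n is a component of A^n, represented by
   any of its words.  Every edge at level n goes from the component of
   (take n w) to the component of w, for a word w of length n+1; we
   represent the edge by w (two words represent the same edge iff they
   are in the same component).  bot(w) = wcomp w, top(w) = wcomp (take n w). *)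
Definition etop (w : seq Q) : seq Q := take (size w).-1 w.

Definition label (w : seq Q) : rat := ((ccard w)%:R / (ccard (etop w))%:R)%R.

Definition liftable (w w' : seq Q) : Prop :=
  forall v, wcomp w v -> exists k, wcomp w' (drop k v).

(* A set of edges (subtree / path) is a predicate E on representatives. *)
Definition path_in (E : seq Q -> Prop) (i r : nat) (p : nat -> seq Q) : Prop :=
  (forall t, t < r -> size (p t) = (i + t).+1 /\ E (p t)) /\
  (forall t, t.+1 < r -> wcomp (p t) (etop (p t.+1))).

Definition path_liftable (r : nat) (p p' : nat -> seq Q) : Prop :=
  forall t, t < r -> liftable (p t) (p' t).

Definition self_liftable_k (E : seq Q -> Prop) (k : nat) : Prop :=
  forall i r p, path_in E (i + k) r p ->
    exists p', path_in E i r p' /\ path_liftable r p p'.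

Definition self_liftable (E : seq Q -> Prop) : Prop :=
  exists k, 0 < k /\ self_liftable_k E k.

(* A branch (infinite initial path) given by representatives b j of its
   vertex at level j. *)
Definition branch (b : nat -> seq Q) : Prop :=
  forall j, size (b j) = j /\ wcomp (b j) (take j (b j.+1)).

Definition branch_edges (b : nat -> seq Q) (w : seq Q) : Prop :=
  exists j, wcomp (b j.+1) w.

Definition active (b : nat -> seq Q) : Prop :=
  ~ (exists N, forall j, N <= j -> label (b j.+1) = 1%R).

(* A finite initial path of length n, represented (as in the paper) by a
   word w0 of Q^n: the path through the components of its prefixes.
   Its edge at level t < n is represented by take t.+1 w0. *)
Definition ipath_edges (w0 : seq Q) (w : seq Q) : Prop :=
  exists t, t < size w0 /\ wcomp (take t.+1 w0) w.

Definition legit_child (e f : seq Q) : Prop :=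
  size f = (size e).+1 /\ wcomp e (etop f) /\ liftable f e.

Definition jungle_trunk (w0 : seq Q) : Prop :=
  [/\ 0 < size w0,
      self_liftable_k (ipath_edges w0) 1,
      (exists f1 f2, legit_child w0 f1 /\ legit_child w0 f2 /\ ~ wcomp f1 f2) &
      (forall f, legit_child w0 f -> label f = 1%R)].

(* stems of the jungle tree: words of bot(e) = wcomp w0 *)
Definition stems_with_prefix (w0 u : seq Q) : nat :=
  #|[set t : (size w0).-tuple Q | `[< wcomp w0 (val t) /\ take (size u) (val t) = u >]]|.

End Mealy.

(* Main.v *)
Require Import Defs.
From HB Require Import structures.
From mathcomp Require Import all_boot all_algebra.
From mathcomp Require Import boolp.
From Stdlib Require Import Relations.
Import GRing.Theory Num.Theory.

Lemma tele (c : nat -> rat) (i n : nat) : (i <= n)%N ->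
  (forall k, (i <= k <= n)%N -> c k != 0%R) ->
  (\prod_(i <= t < n) (c t.+1 / c t) = c n / c i)%R.
Proof.
move=> le; have [k ek] : exists k, n = (i + k)%N by exists (n - i)%N; rewrite subnKC.
subst n; elim: k i {le} => [|k IH] i nz.
  rewrite addn0 big_geq // divff //; apply: nz; by rewrite addn0 leqnn.
rewrite big_ltn; last by rewrite addnS ltnS leq_addr.
rewrite -addSnnS IH; last first.
  by move=> j /andP [h1 h2]; apply: nz; rewrite ltnW //=; rewrite addSnnS in h2.
rewrite mulrC mulrA divrK // unitfE; apply: nz; by rewrite leqnSn -addSnnS leq_addr.
Qed.

Section S.
Variables (Q S : finType) (delta : S -> Q -> Q) (rho : Q -> S -> S).

Lemma size_deltaw s u : size (deltaw delta rho s u) = size u.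
Proof. by elim: u s => [|x u IH] s //=; rewrite IH. Qed.

Lemma take_deltaw k s u : take k (deltaw delta rho s u) = deltaw delta rho s (take k u).
Proof. by elim: u k s => [|x u IH] [|k] s //=; rewrite IH. Qed.

Lemma wcomp_size u v : wcomp delta rho u v -> size u = size v.
Proof.
elim=> //.
- by move=> x y [s <-]; rewrite size_deltaw.
- by move=> x y z _ -> _ ->.
Qed.

Lemma wcomp_take k u v : wcomp delta rho u v -> wcomp delta rho (take k u) (take k v).
Proof.
elim.
- move=> x y [s <-]; apply: rst_step; exists s; by rewrite take_deltaw.
- by move=> x; apply: rst_refl.
- by move=> x y _ H; apply: rst_sym.
- by move=> x y z _ H1 _ H2; apply: rst_trans H2.
Qed.

Hypothesis rev : reversible delta.

Lemma deltaw_inj s u v : size u = size v ->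
  deltaw delta rho s u = deltaw delta rho s v -> u = v.
Proof.
elim: u v s => [|x u IH] [|y v] s //= [sz] [e1 e2].
have exy : x = y by have [g gK _] := rev s; rewrite -(gK x) -(gK y) e1.
subst y; congr (_ :: _); exact: IH e2.
Qed.

Definition dtup n s (t : n.-tuple Q) : n.-tuple Q :=
  @Tuple n Q (deltaw delta rho s t) (introT eqP (etrans (size_deltaw s t) (size_tuple t))).

Lemma dtup_inj n s : injective (@dtup n s).
Proof.
move=> a b /(f_equal val) /= e; apply: val_inj; apply: deltaw_inj e.
by rewrite !size_tuple.
Qed.

Variable w0 : seq Q.
Definition F u := stems_with_prefix delta rho w0 u.

Lemma F_le s u : (F u <= F (deltaw delta rho s u))%N.
Proof.
rewrite /F /stems_with_prefix.
rewrite -(card_imset _ (@dtup_inj _ s)); apply: subset_leq_card.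
apply/subsetP => t' /imsetP [t]; rewrite inE => /asboolP [hw ht] ->.
rewrite inE; apply/asboolP; split.
  apply: rst_trans hw _; apply: rst_step; by exists s.
by rewrite /= size_deltaw take_deltaw ht.
Qed.

Lemma F_step s u : F (deltaw delta rho s u) = F u.
Proof.
apply/eqP; rewrite eqn_leq F_le andbT.
pose x := in_tuple u.
pose f := @dtup (size u) s.
have fi : injective f by exact: dtup_inj.
have H k y : (F (val y) <= F (val (iter k f y)))%N.
  elim: k => [|k IH] //=; apply: leq_trans IH _; exact: F_le.
have := H (fingraph.order f x).-1 (f x).
by rewrite -iterSr orderSpred (iter_order fi).
Qed.

Lemma F_wcomp u v : wcomp delta rho u v -> F u = F v.
Proof.
elim=> //.
- by move=> x y [s <-]; rewrite F_step.
- by move=> x y z _ -> _ ->.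
Qed.

Definition gtk i (t : (size w0).-tuple Q) : (size (take i w0)).-tuple Q :=
  @Tuple _ Q (take i t) (introT eqP (etrans (size_take _ _)
     (etrans (congr1 (fun m => if i < m then i else m) (size_tuple t)) (esym (size_take _ _))))).

Lemma count_main i u : (i <= size w0)%N -> wcomp delta rho (take i w0) u ->
  ccard delta rho w0 = (ccard delta rho (take i w0) * F u)%N.
Proof.
move=> le hu.
rewrite /ccard -sum1dep_card (partition_big (gtk i) predT) //=.
have szi : size (take i w0) = i by rewrite size_takel.
have E : forall p : (size (take i w0)).-tuple Q,
    (\sum_(t | `[< wcomp delta rho w0 (val t) >] && (gtk i t == p)) 1)%N = F (val p).
  move=> p; rewrite sum1dep_card /F /stems_with_prefix; apply: eq_card => t.
  have -> : size (val p) = i by rewrite size_tuple.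
  rewrite !inE -val_eqE /=.
  apply/andP/asboolP.
    by case=> /asboolP h /eqP e.
  by case=> h e; split; [apply/asboolP| apply/eqP].
rewrite (eq_bigr _ (fun p _ => E p)).
rewrite (eq_bigr (fun p => if `[< wcomp delta rho (take i w0) (val p) >] then F u else 0%N)); last first.
  move=> p _; case: asboolP => hp.
    apply: F_wcomp; exact: (rst_trans _ _ _ _ _ (rst_sym _ _ _ _ hp) hu).
  rewrite /F /stems_with_prefix; apply/eqP; rewrite cards_eq0; apply/eqP/setP => t; rewrite !inE.
  apply/negbTE; apply/asboolP => -[h1 h2]; apply: hp.
  have e : size (val p) = i by rewrite size_tuple.
  rewrite -h2 e; exact: wcomp_take.
by rewrite -big_mkcond sum_nat_cond_const mulnC.
Qed.
End S.

Lemma ccard_pos (Q S : finType) (delta : S -> Q -> Q) (rho : Q -> S -> S) v :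
  (0 < ccard delta rho v)%N.
Proof.
apply/card_gt0P; exists (in_tuple v); rewrite inE; apply/asboolP; exact: rst_refl.
Qed.

Local Open Scope ring_scope.

Theorem lemma5p12 (Q S : finType) (delta : S -> Q -> Q) (rho : Q -> S -> S)
  (hQ : (0 < #|Q|)%N) (hS : (0 < #|S|)%N)
  (hconn : connected delta)
  (hbirev : bireversible delta rho)
  (hnoact : forall b : nat -> seq Q, branch delta rho b -> active delta rho b ->
     ~ self_liftable delta rho (branch_edges delta rho b))
  (w0 : seq Q) (hjungle : jungle_trunk delta rho w0) :
  forall (i : nat) (u : seq Q), (i <= size w0)%N -> size u = i ->
    (exists v, wcomp delta rho w0 v /\ take i v = u) ->
    (stems_with_prefix delta rho w0 u)%:R
      = \prod_(i <= t < size w0) label delta rho (take t.+1 w0) :> rat.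
Proof.
move=> i u le su [v [hv hvu]].
case: hbirev => _ rev _.
have hu : wcomp delta rho (take i w0) u by rewrite -hvu; exact: wcomp_take.
have cnt := @count_main Q S delta rho rev w0 i u le hu.
pose c t := ((ccard delta rho (take t w0))%:R : rat).
rewrite (eq_big_nat _ _ (F2 := fun t => c t.+1 / c t)); last first.
  move=> t /andP [_ lt]; rewrite /label /etop size_takel //= take_takel //.
rewrite tele //; last by move=> k _; rewrite /c pnatr_eq0 -lt0n ccard_pos.
rewrite /c take_size cnt natrM mulrAC divff ?mul1r // pnatr_eq0 -lt0n ccard_pos //.
Qed.
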